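(* In the Setting below, for every proper stable set sequence $\mathcal I=(I_1,\dots,I_t)$, the probability that MaximalSetResample follows $\mathcal I$ is at most $p_{\mathcal I}=\prod_{s=1}^t\prod_{i\in I_s}p_i$. Consequently, for every $\ell\ge1$ the probability that the algorithm runs for at least $\ell$ iterations is at most $\sum_{\mathcal I\in\mathrm{Prop}_\ell}p_{\mathcal I}$, and for every $s\ge1$ the probability that it resamples at least $s$ events is at most $\sum_{\mathcal I\in\mathrm{Prop}:\,\sigma(\mathcal I)=s}p_{\mathcal I}$.
   Context: Setting: Let $(\Omega,\mu)$ be a probability space, $E_1,\dots,E_n\subseteq\Omega$ events with $p_i=\mu(E_i)>0$, and $G$ an undirected simple graph on $[n]$; $\Gamma(i)$ is the set of neighbours of $i$, $\Gamma^+(i)=\Gamma(i)\cup\{i\}$, $\Gamma^+(J)=\bigcup_{i\in J}\Gamma^+(i)$. A resampling oracle for $E_i$ with respect to $G$ is a randomized procedure $r_i:\Omega\to\Omega$ such that (R1) if $\omega$ is distributed according to $\mu$ conditioned on $E_i$, then $r_i(\omega)$ is distributed according to $\mu$; (R2) for every $j\notin\Gamma^+(i)$ and every $\omega\notin E_j$, $r_i(\omega)\notin E_j$ with probability 1. Assume one can sample from $\mu$, test whether $\omega\in E_i$, and that resampling oracles $r_1,\dots,r_n$ for $E_1,\dots,E_n$ with respect to $G$ are available, each call using fresh independent randomness. Algorithm MaximalSetResample: draw $\omega\sim\mu$; then repeat iterations: in each iteration set $J:=\emptyset$ and, while there is an index $i\notin\Gamma^+(J)$ with $\omega\in E_i$,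 take the smallest such $i$, set $J:=J\cup\{i\}$ and $\omega:=r_i(\omega)$; if an iteration ends with $J=\emptyset$, stop and output $\omega$. The number of events resampled is the total number of calls to resampling oracles. A stable set sequence is a finite sequence $(I_1,\dots,I_t)$ of independent sets of $G$ with $I_{s+1}\subseteq\Gamma^+(I_s)$ for $1\le s<t$; it is proper if every $I_s$ is nonempty. $\mathrm{Prop}$ is the set of proper stable set sequences, $\mathrm{Prop}_\ell$ those of length $\ell$, and $\sigma(\mathcal I)=\sum_s|I_s|$. The algorithm follows $\mathcal I=(I_1,\dots,I_t)$ if for each $s<t$, $I_s$ is exactly the set $J$ of events resampled in iteration $s$, and $I_t$ is the set of the first $m$ events resampled in iteration $t$, for some $m\ge1$. *)

(* Defs.v *)
From HB Require Import structures.
From mathcomp Require Import all_boot all_order all_algebra.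
From mathcomp Require Import all_classical all_reals all_analysis.
Set Implicit Arguments. Unset Strict Implicit. Unset Printing Implicit Defensive.
Import Order.TTheory GRing.Theory Num.Theory.

Section Graph.
Variable n : nat.
Variable adj : rel 'I_n.

Definition simple_graph : Prop := symmetric adj /\ irreflexive adj.

Definition closedN (J : {set 'I_n}) : {set 'I_n} :=
  [set j | (j \in J) || [exists i in J, adj i j]].

Definition independent (I : {set 'I_n}) : bool :=
  [forall i in I, forall j in I, ~~ adj i j].

Fixpoint stable_chain (I0 : {set 'I_n}) (s : seq {set 'I_n}) : bool :=
  match s with
  | [::] => true
  | I1 :: s' => (I1 \subset closedN I0) && stable_chain I1 s'
  end.

Definition stable_seq (s : seq {set 'I_n}) : bool :=
  seq.all independent s &&
  match s with [::] => true | I1 :: s' => stable_chain I1 s' end.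

Definition proper_stable_seq (s : seq {set 'I_n}) : bool :=
  stable_seq s && seq.all (fun I => I != finset.set0) s.

Definition sigma_seq (s : seq {set 'I_n}) : nat := \sum_(I <- s) #|I|.
End Graph.

(* One elementary step of MaximalSetResample:
   Res i  : the oracle r_i is called (event i is resampled);
   EndIt  : an iteration ends with J <> emptyset (a new iteration starts);
   Halt   : an iteration ends with J = emptyset, the algorithm stops. *)
Inductive step (n : nat) := Res of 'I_n | EndIt | Halt.
Arguments EndIt {n}. Arguments Halt {n}.

Section Traces.
Variable n : nat.

(* the lists of events resampled in the successive iterations, in order;
   the last list is the current (possibly unfinished) iteration *)
Fixpoint blocks (tr : seq (step n)) : seq (seq 'I_n) :=
  match tr with
  | [::] => [:: [::]]
  | Res i :: tr' => let b := blocks tr' in (i :: head [::] b) :: behead b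
  | EndIt :: tr' => [::] :: blocks tr'
  | Halt :: _ => [:: [::]]
  end.

(* the trace (prefix) witnesses that the algorithm follows (I_1,...,I_t):
   iterations 1..t-1 are finished and resampled exactly I_1..I_{t-1},
   and I_t is the set of the first m >= 1 events resampled in iteration t *)
Definition follows_trace (I : seq {set 'I_n}) (tr : seq (step n)) : Prop :=
  match I with
  | [::] => True
  | _ :: _ =>
    let bs := blocks tr in let t := size I in
    t <= size bs /\
    (forall s, s < t.-1 -> [set x in nth [::] bs s] = nth finset.set0 I s) /\
    exists m, 0 < m /\ m <= size (nth [::] bs t.-1) /\
              [set x in take m (nth [::] bs t.-1)] = nth finset.set0 I t.-1
  end.

Definition atleast_iter_trace (l : nat) (tr : seq (step n)) : Prop :=
  l <= count (fun b => b != [::]) (blocks tr).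

Definition atleast_res_trace (s : nat) (tr : seq (step n)) : Prop :=
  s <= count (fun st => if st is Res _ then true else false) tr.
End Traces.

Section Algorithm.
Local Open Scope classical_set_scope.
Local Open Scope ring_scope.
Local Open Scope ereal_scope.
Context {d : measure_display} {T : measurableType d} {R : realType}.
Variable n : nat.
Variable adj : rel 'I_n.
Variable E : 'I_n -> set T.
Variable mu : probability T R.
Variable r : 'I_n -> R.-pker T ~> T.

Definition oracle_R1 (i : 'I_n) : Prop :=
  forall A, measurable A ->
    ((fine (mu (E i)))^-1)%R%:E * \int[mu]_(x in E i) r i x A = mu A.

Definition oracle_R2 (i : 'I_n) : Prop :=
  forall j, j \notin closedN adj (finset.set1 i) ->
    forall x, ~ E j x -> r i x (E j) = 0.

Definition next_event (x : T) (J : {set 'I_n}) : option 'I_n :=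
  ohead [seq i <- enum 'I_n | (i \notin closedN adj J) && `[< E i x >]].

(* probability, starting from the current point x, current resampled set J
   and trace so far h, that within at most k further elementary steps the
   trace of the run has a prefix satisfying Q *)
Fixpoint run_val (Q : seq (step n) -> Prop) (k : nat) (x : T)
    (J : {set 'I_n}) (h : seq (step n)) : \bar R :=
  if `[< Q h >] then 1 else
  match k with
  | 0 => 0
  | k'.+1 =>
    match next_event x J with
    | Some i => \int[r i x]_y run_val Q k' y (i |: J) (rcons h (Res i))
    | None => if J == finset.set0 then (if `[< Q (rcons h Halt) >] then 1 else 0)
              else run_val Q k' x finset.set0 (rcons h EndIt)
    end
  end.

(* probability that the run (started from omega ~ mu) has a finite prefix
   trace satisfying Q: sup over the number k of elementary steps *)
Definition alg_prob (Q : seq (step n) -> Prop) : \bar R :=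
  ereal_sup [set \int[mu]_x run_val Q k x finset.set0 [::] | k in [set: nat]].

Definition pI (I : seq {set 'I_n}) : R :=
  (\prod_(S <- I) \prod_(i in S) fine (mu (E i)))%R.
End Algorithm.

(* Main.v *)
Require Import Defs.
From HB Require Import structures.
From mathcomp Require Import all_boot all_order all_algebra.
From mathcomp Require Import all_classical all_reals all_analysis.
From mathcomp Require Import measurable_realfun.
Import Order.TTheory GRing.Theory Num.Theory.
Local Open Scope classical_set_scope.
Local Open Scope ring_scope.

Module CombM.
Local Set Implicit Arguments. Local Unset Strict Implicit. Local Unset Printing Implicit Defensive.
Local Close Scope ring_scope.
Local Close Scope classical_set_scope.

Section Comb.
Variable n : nat.
Variable adj : rel 'I_n.

Definition ltI (a b : 'I_n) : bool := (a < b)%N.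

Lemma ltI_trans : transitive ltI.
Proof. by move=> a b c; rewrite /ltI; apply: ltn_trans. Qed.
Lemma ltI_irr : irreflexive ltI.
Proof. by move=> a; rewrite /ltI ltnn. Qed.

Lemma sorted_enum_set (S : {set 'I_n}) : sorted ltI (enum S).
Proof.
have -> : enum S = [seq x <- enum 'I_n | x \in S].
  by rewrite enumT /enum_mem.
apply: sorted_filter; first exact: ltI_trans.
by have := iota_ltn_sorted 0 n; rewrite -val_enum_ord sorted_map.
Qed.

Lemma enum_sorted (b : seq 'I_n) : sorted ltI b -> enum [set x in b] = b.
Proof.
move=> sb; apply: (irr_sorted_eq ltI_trans ltI_irr) => //.
  exact: sorted_enum_set.
by move=> x; rewrite mem_enum inE.
Qed.

Definition prevok (prev : option {set 'I_n}) (i : 'I_n) : bool :=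
  if prev is Some P then i \in Defs.closedN adj P else true.

Fixpoint goodF (prev : option {set 'I_n}) (cur : seq 'I_n) (h : seq (step n)) : bool :=
  match h with
  | [::] => true
  | Res i :: h' => [&& i \notin Defs.closedN adj [set x in cur],
                      all (fun j => ltI j i) cur, prevok prev i &
                      goodF prev (rcons cur i) h']
  | EndIt :: h' => (cur != [::]) && goodF (Some [set x in cur]) [::] h'
  | Halt :: h' => if h' is [::] then true else false
  end.

Definition blk_ok prev (b : seq 'I_n) : bool :=
  [&& sorted ltI b, Defs.independent adj [set x in b] & all (prevok prev) b].

Fixpoint GB (prev : option {set 'I_n}) (bs : seq (seq 'I_n)) : Prop :=
  match bs with
  | [::] => True
  | [:: b] => blk_ok prev b
  | b :: ((_ :: _) as bs') => blk_ok prev b /\ b != [::] /\ GB (Some [set x in b]) bs'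
  end.

Lemma blocks_nil (h : seq (step n)) : blocks h != [::].
Proof. by case: h => [|[i| |] h]. Qed.

Lemma blocks_cons (h : seq (step n)) : blocks h = head [::] (blocks h) :: behead (blocks h).
Proof. by case: h => [|[i| |] h]. Qed.

Hypothesis sg : simple_graph adj.

Lemma notin_closedN (J : {set 'I_n}) i :
  (i \notin Defs.closedN adj J) = (i \notin J) && [forall j in J, ~~ adj j i].
Proof.
rewrite /Defs.closedN inE negb_or; congr (_ && _).
rewrite negb_exists; apply: eq_forallb => j. by rewrite negb_and implybE.
Qed.

Lemma blk_ok_rcons prev cur i :
  blk_ok prev cur -> i \notin Defs.closedN adj [set x in cur] ->
  all (fun j => ltI j i) cur -> prevok prev i -> blk_ok prev (rcons cur i).
Proof.
case/and3P => s1 ind1 p1; rewrite notin_closedN => /andP[ni /forallP na] al pi.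
have [sym irr] := sg.
apply/and3P; split.
- case: cur s1 al {ind1 p1 ni na} => [|c cs] // s1 al.
  rewrite /= rcons_path; apply/andP; split => //; apply: (allP al); exact: mem_last.
- apply/forallP => a; apply/implyP; rewrite inE mem_rcons in_cons => ha.
  apply/forallP => b; apply/implyP; rewrite inE mem_rcons in_cons => hb.
  case/orP: ha => [/eqP -> | ha]; case/orP: hb => [/eqP -> | hb].
  + by rewrite irr.
  + by rewrite sym; have := na b; rewrite inE hb.
  + by have := na a; rewrite inE ha.
  + by move/forallP: ind1 => /(_ a); rewrite inE ha /= => /forallP /(_ b); rewrite inE hb.
- by rewrite all_rcons pi p1.
Qed.

Lemma blk_ok_nil prev : blk_ok prev [::].
Proof. by rewrite /blk_ok /= andbT; apply/forallP => a; rewrite inE. Qed.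

Lemma goodF_GB prev cur (h : seq (step n)) : blk_ok prev cur -> goodF prev cur h ->
  GB prev ((cur ++ head [::] (blocks h)) :: behead (blocks h)).
Proof.
elim: h prev cur => [|[i| |] h IH] prev cur bok /=.
- by rewrite cats0.
- case/and4P => ni al pi g.
  have := IH _ _ (blk_ok_rcons bok ni al pi) g.
  by rewrite cat_rcons.
- case/andP => cn g.
  have := IH (Some [set x in cur]) [::] (blk_ok_nil _) g.
  rewrite /= cats0.
  by case E: (blocks h) (blocks_nil h) => [|b bs] //= _ gb.
- by rewrite cats0.
Qed.


Definition pre (w h : seq (step n)) : Prop := exists h', h = w ++ h'.

Fixpoint wordOf (bs : seq (seq 'I_n)) : seq (step n) :=
  match bs with
  | [::] => [::]
  | [:: b] => map (@Res n) b
  | b :: ((_ :: _) as bs') => map (@Res n) b ++ EndIt :: wordOf bs'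
  end.

Lemma decomp (h : seq (step n)) : exists rest,
  h = map (@Res n) (head [::] (blocks h)) ++ rest /\
  (behead (blocks h) = [::] \/
   exists h', rest = EndIt :: h' /\ behead (blocks h) = blocks h').
Proof.
elim: h => [|[i| |] h [rest [E1 E2]]].
- by exists [::]; split => //; left.
- by exists rest; rewrite /= {1}E1; split => //.
- by exists (EndIt :: h); split => //; right; exists h.
- by exists (Halt :: h); split => //; left.
Qed.

Lemma W (bs : seq (seq 'I_n)) (h : seq (step n)) : bs != [::] ->
  size bs <= size (blocks h) ->
  (forall s, s < (size bs).-1 -> nth [::] bs s = nth [::] (blocks h) s) ->
  (exists c, nth [::] (blocks h) (size bs).-1 = last [::] bs ++ c) ->
  pre (wordOf bs) h.
Proof.
elim: bs h => [|b bs IH] h // _.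
have [rest [Eh Erest]] := decomp h.
case: bs IH => [|b' bs] IH /=.
- move=> _ _ [c Ec]; rewrite nth0 in Ec; exists (map (@Res n) c ++ rest).
  by rewrite Eh Ec catA map_cat.
- move=> Hsz Hnth [c Ec].
  rewrite (blocks_cons h) in Hsz Hnth Ec.
  have Hb := Hnth 0 isT; rewrite /= in Hb.
  case: Erest => [Eb|[h' [Er Eb]]]; first by rewrite Eb in Hsz.
  rewrite Eb in Hsz Hnth Ec.
  have [h'' Eh'] : pre (wordOf (b' :: bs)) h'.
    apply: IH => //.
    - by move=> s Hs; have := Hnth s.+1 Hs.
    - by exists c.
  by exists h''; rewrite Eh Er Eh' -Hb -catA.
Qed.

Lemma GB_mem prev bs : GB prev bs ->
  forall b, b \in bs -> sorted ltI b && Defs.independent adj [set x in b].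
Proof.
elim: bs prev => [|b bs IH] prev //=.
case: bs IH => [|b' bs] IH.
- by case/and3P => s1 i1 _ c; rewrite inE => /eqP ->; rewrite s1 i1.
- case=> /and3P [s1 i1 _] [_ gb] c; rewrite in_cons => /orP [/eqP ->|].
    by rewrite s1 i1.
  exact: IH gb c.
Qed.

Lemma GB_nonempty prev bs : GB prev bs ->
  forall s, s.+1 < size bs -> nth [::] bs s != [::].
Proof.
elim: bs prev => [|b bs IH] prev //=.
case: bs IH => [|b' bs] IH // [_ [bn gb]] [|s] //= Hs.
exact: IH gb s Hs.
Qed.

Lemma independent_sub (S S' : {set 'I_n}) : S \subset S' ->
  Defs.independent adj S' -> Defs.independent adj S.
Proof.
move=> /fintype.subsetP sub /forallP ind; apply/forallP => a; apply/implyP => aS.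
have := ind a; rewrite (sub a aS) /= => /forallP ia.
apply/forallP => b; apply/implyP => bS.
by have := ia b; rewrite (sub b bS).
Qed.

Lemma blk_ok_take prev b m : blk_ok prev b -> blk_ok prev (take m b).
Proof.
case/and3P => s1 i1 p1; apply/and3P; split.
- exact: take_sorted.
- apply: independent_sub i1; apply/fintype.subsetP => x; rewrite !inE; exact: mem_take.
- by apply/allP => x /mem_take; apply: (allP p1).
Qed.

Lemma GB_trunc prev bs k m : GB prev bs -> k < size bs ->
  GB prev (rcons (take k bs) (take m (nth [::] bs k))).
Proof.
elim: bs prev k => [|b bs IH] prev k //.
case: k => [|k] /=.
- move=> gb _; apply: blk_ok_take.
  by case: bs gb {IH} => [|b' bs] // [].
- case: bs IH => [|b' bs] IH //= [bo [bn gb]] Hk.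
  have := IH _ k gb Hk.
  by case: k Hk => [|k] Hk /=; split.
Qed.

Lemma GB_chain P bs : GB (Some P) bs -> stable_chain adj P (map (fun b => [set x in b]) bs).
Proof.
elim: bs P => [|b bs IH] P //=.
have sub : blk_ok (Some P) b -> [set x in b] \subset Defs.closedN adj P.
  case/and3P => _ _ p1; apply/fintype.subsetP => x; rewrite inE => xb.
  exact: (allP p1).
case: bs IH => [|b' bs] IH.
- by move=> bo; rewrite sub.
- by case=> bo [_ gb]; rewrite sub //=; apply: IH gb.
Qed.

Lemma GB_proper bs : GB None bs -> all (fun b => b != [::]) bs ->
  proper_stable_seq adj (map (fun b => [set x in b]) bs).
Proof.
move=> gb ne; apply/andP; split.
- apply/andP; split.
  + apply/allP => S /mapP [b bin ->].
    by case/andP: (GB_mem gb bin).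
  + case: bs gb {ne} => [|b bs] //=.
    case: bs => [|b' bs] // [_ [_ gb]].
    exact: GB_chain gb.
- apply/allP => S /mapP [b bin ->].
  have := allP ne b bin; case: b {bin} => [|x b] // _.
  by apply/set0Pn; exists x; rewrite inE mem_head.
Qed.


Definition setOf (b : seq 'I_n) : {set 'I_n} := [set x in b].

Definition wI (I : seq {set 'I_n}) := wordOf (map (fun S : {set 'I_n} => enum S) I).

Lemma GB_enum prev t : GB prev t -> map (fun S : {set 'I_n} => enum S) (map setOf t) = t.
Proof.
move=> gb; rewrite -map_comp -[RHS]map_id; apply/eq_in_map => b bin /=.
by case/andP: (GB_mem gb bin) => sb _; rewrite /setOf enum_sorted.
Qed.

Lemma follows_pre (I : seq {set 'I_n}) (h : seq (step n)) :
  GB None (blocks h) -> follows_trace I h -> I != [::] -> pre (wI I) h.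
Proof.
move=> gb; case: I => [|S I] //= [Hsz [Hn [m [m0 [msz Hm]]]]] _.
apply: W => //.
- by rewrite size_map.
- move=> s; rewrite size_map => Hs.
  have Hs' : s < size (S :: I) by rewrite /= ltnS ltnW.
  rewrite (nth_map finset.set0) // -(Hn s Hs) enum_sorted //.
  have Hb : s < size (blocks h) by apply: leq_trans Hsz; rewrite ltnS ltnW.
  by case/andP: (GB_mem gb (mem_nth [::] Hb)).
- exists (drop m (nth [::] (blocks h) (size I))).
  rewrite size_map /= (last_map (fun S0 : {set 'I_n} => enum S0)).
  have -> : last S I = nth finset.set0 (S :: I) (size I).
    by rewrite -[size I]/((size (S :: I)).-1) nth_last.
  rewrite -Hm enum_sorted ?cat_take_drop //.
  apply: take_sorted.
  have Hb : size I < size (blocks h) by [].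
  by case/andP: (GB_mem gb (mem_nth [::] Hb)).
Qed.


Lemma GB_take prev bs l : GB prev bs -> 0 < l -> l <= size bs -> GB prev (take l bs).
Proof.
move=> gb; case: l => [|l] // _ Hl.
rewrite (take_nth [::] Hl) -(take_size (nth [::] bs l)).
exact: GB_trunc.
Qed.

Lemma iter_pre l (h : seq (step n)) : GB None (blocks h) -> 0 < l ->
  l <= count (fun b => b != [::]) (blocks h) ->
  [/\ proper_stable_seq adj (map setOf (take l (blocks h))),
      size (take l (blocks h)) = l &
      pre (wI (map setOf (take l (blocks h)))) h].
Proof.
move=> gb l0 lc.
set bs := blocks h in gb lc *.
have lsz : l <= size bs by apply: leq_trans lc (count_size _ _).
have gbt := GB_take gb l0 lsz.
have szt : size (take l bs) = l by rewrite size_take_min; apply/minn_idPl.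
have ne : forall s, s < l -> nth [::] bs s != [::].
  move=> s sl; case: (ltnP s.+1 (size bs)) => Hs; first exact: GB_nonempty gb s Hs.
  have Es : l = size bs by apply/eqP; rewrite eqn_leq lsz /=; exact: leq_trans Hs sl.
  have : all (fun b => b != [::]) bs.
    by rewrite all_count eqn_leq count_size -Es lc.
  by move/allP; apply; apply: mem_nth; rewrite -Es.
split => //.
- apply: GB_proper gbt _.
  apply/(all_nthP [::]) => s; rewrite szt => sl.
  by rewrite nth_take //; apply: ne.
- rewrite /wI (GB_enum gbt).
  apply: W.
  + by rewrite -size_eq0 szt -lt0n.
  + by rewrite szt.
  + by move=> s; rewrite szt => sl; rewrite nth_take // (leq_trans sl) // leq_pred.
  + exists [::]; rewrite cats0 (last_nth [::]) szt.
    case: l l0 {lc lsz gbt szt ne} => [|l] //= _.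
    by rewrite nth_take.
Qed.

Lemma split_sum (bs : seq (seq 'I_n)) s : 0 < s -> s <= sumn (map size bs) ->
  exists k m, [/\ k < size bs, 0 < m, m <= size (nth [::] bs k) &
                  sumn (map size (take k bs)) + m = s].
Proof.
elim: bs s => [|b bs IH] s s0 //=; first by rewrite leqNgt s0.
move=> Hs; case: (leqP s (size b)) => Hb.
  by exists 0, s; split.
have H1 : 0 < s - size b by rewrite subn_gt0.
have H2 : s - size b <= sumn (map size bs) by rewrite leq_subLR.
have [k [m [k1 m0 m1 E]]] := IH (s - size b) H1 H2.
exists k.+1, m; split => //=.
by rewrite -addnA E subnKC // ltnW.
Qed.

Lemma sumn_ge (t : seq (seq 'I_n)) : all (fun b => b != [::]) t -> size t <= sumn (map size t).
Proof.
elim: t => [|b t IH] //= /andP [bn al].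
rewrite -add1n leq_add // ?IH //.
by case: b bn.
Qed.

Lemma res_pre s (h : seq (step n)) : GB None (blocks h) -> 0 < s ->
  s <= sumn (map size (blocks h)) ->
  exists J : seq {set 'I_n}, [/\ proper_stable_seq adj J, size J <= s,
     sigma_seq J = s & pre (wI J) h].
Proof.
move=> gb s0 ss.
set bs := blocks h in gb ss *.
have [k [m [k1 m0 m1 E]]] := split_sum s0 ss.
set b := nth [::] bs k.
set bs' := rcons (take k bs) (take m b).
have gb' : GB None bs' := GB_trunc m gb k1.
have szk : size (take k bs) = k by rewrite size_take_min; apply/minn_idPl; exact: ltnW.
have szm : size (take m b) = m by rewrite size_take_min; apply/minn_idPl.
have net : all (fun b => b != [::]) (take k bs).
  apply/(all_nthP [::]) => j; rewrite szk => jk.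
  by rewrite nth_take //; apply: (GB_nonempty gb); apply: leq_trans k1.
have ne : all (fun b => b != [::]) bs'.
  by rewrite /bs' all_rcons net andbT -size_eq0 szm -lt0n.
exists (map setOf bs'); split.
- exact: GB_proper.
- rewrite size_map size_rcons szk -E -[k.+1]addn1 leq_add //.
  by rewrite -{1}szk sumn_ge.
- rewrite /sigma_seq big_map.
  rewrite (eq_big_seq (fun b => size b)); last first.
    move=> c cin; rewrite /setOf cardsE; apply/card_uniqP.
    case/andP: (GB_mem gb' cin) => sc _.
    exact: (sorted_uniq ltI_trans ltI_irr).
  by rewrite -E sumnE big_map /bs' -cats1 big_cat big_seq1 szm.
- rewrite /wI (GB_enum gb').
  apply: W.
  + by rewrite /bs'; case: (take k bs).
  + by rewrite size_rcons szk.
  + move=> j; rewrite size_rcons szk /= => jk.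
    by rewrite nth_rcons szk jk nth_take.
  + exists (drop m b); rewrite size_rcons szk /= last_rcons.
    by rewrite cat_take_drop.
Qed.

Lemma count_res prev cur (h : seq (step n)) : goodF prev cur h ->
  count (fun st : step n => if st is Res _ then true else false) h =
  sumn (map size (blocks h)).
Proof.
elim: h prev cur => [|[i| |] h IH] prev cur //=.
- case/and4P => _ _ _ g; rewrite (IH _ _ g).
  by case: (blocks h).
- by case/andP => _ g; rewrite (IH _ _ g).
- by case: h IH.
Qed.

End Comb.

End CombM.
Import CombM.

Module R1fM.
Local Set Implicit Arguments. Local Unset Strict Implicit. Local Unset Printing Implicit Defensive.
Local Open Scope ereal_scope.

Section R1f.
Context d (T : measurableType d) (R : realType).
Variables (mu : probability T R) (k : R.-pker T ~> T) (E : set T).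
Hypothesis mE : measurable E.

Definition ll : T -> {measure set T -> \bar R} := fun _ => mu.

Let mll U : measurable U -> measurable_fun [set: T] (ll ^~ U).
Proof. by move=> _ /=; rewrite /ll /=; exact: measurable_cst. Qed.

HB.instance Definition _ := isKernel.Build _ _ T T R ll mll.

Let ll_uub : measure_fam_uub ll.
Proof. exists 2%R => x; rewrite /ll /=. have -> : (mu : {measure set T -> \bar R}) [set: T] = 1 by exact: probability_setT. by rewrite lte_fin ltr1n. Qed.

HB.instance Definition _ := Kernel_isFinite.Build _ _ T T R ll ll_uub.

Definition kk : T * T -> {measure set T -> \bar R} :=
  fun xy => if `[< E xy.2 >] then k xy.2 else mzero.

Let kkE U xy : kk xy U = (\1_E xy.2)%:E * k xy.2 U.
Proof.
rewrite /kk indicE; case: asboolP => [h|h].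
  by rewrite mem_set // mul1e.
by rewrite memNset // mul0e.
Qed.

Let mkk U : measurable U -> measurable_fun [set: T * T] (kk ^~ U).
Proof.
move=> mU.
rewrite (_ : kk ^~ U = (fun y => (\1_E y)%:E * k y U) \o snd); last first.
  by apply/funext => xy; rewrite kkE.
apply: measurableT_comp => //.
apply: emeasurable_funM.
  by apply/measurable_EFinP; exact: measurable_indic.
exact: measurable_kernel.
Qed.

HB.instance Definition _ := isKernel.Build _ _ _ T R kk mkk.

Let kk_uub : measure_fam_uub kk.
Proof.
exists 2%R => xy; rewrite kkE.
apply: (@le_lt_trans _ _ 1); last by rewrite lte_fin ltr1n.
rewrite indicE; case: (_ \in _); last by rewrite mul0e.
by rewrite mul1e prob_kernel.
Qed.

HB.instance Definition _ := Kernel_isFinite.Build _ _ _ T R kk kk_uub.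


Hypothesis R1 : forall A, measurable A ->
  ((fine (mu E))^-1)%R%:E * \int[mu]_(x in E) k x A = mu A.
Hypothesis mu_pos : 0 < mu E.

Lemma R1f (f : T -> \bar R) : (forall z, 0 <= f z) -> measurable_fun setT f ->
  \int[mu]_(x in E) \int[k x]_z f z = (fine (mu E))%:E * \int[mu]_x f x.
Proof.
move=> f0 mf.
have Efin : mu E \is a fin_num.
  by rewrite ge0_fin_numE ?measure_ge0 // (le_lt_trans (probability_le1 mu mE)) // ltey.
have p0 : (0 < fine (mu E))%R by rewrite fine_gt0 // mu_pos /= -ge0_fin_numE ?measure_ge0 // ltW.
have [x0 _] : exists x : T, True.
  apply: contrapT => hT.
  have : mu [set: T] = mu set0.
    congr (mu _); apply/seteqP; split => x // _; apply: hT; by exists x.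
  by rewrite probability_setT measure0 => /eqP; rewrite onee_eq0.
have H := integral_kcomp ll kk x0 f0 mf.
have Hr : \int[ll x0]_y \int[kk (x0, y)]_z f z = \int[mu]_(y in E) \int[k y]_z f z.
  have -> : \int[ll x0]_y \int[kk (x0, y)]_z f z = \int[mu]_y \int[kk (x0, y)]_z f z by [].
  rewrite [RHS]integral_mkcond; apply: eq_integral => y _.
  rewrite /kk /patch /=; case: asboolP => [h|h].
    by rewrite mem_set.
  by rewrite memNset // integral_measure_zero.
rewrite -Hr -H.
pose pn := @NngNum _ (fine (mu E)) (ltW p0).
rewrite (eq_measure_integral (mscale pn mu)); last first.
  move=> A mA _.
  change (\int[mu]_y kk (x0, y) A = (fine (mu E))%:E * mu A).
  rewrite -(R1 mA) muleA -EFinM divff ?mul1e; last by rewrite gt_eqF.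
  rewrite [RHS]integral_mkcond; apply: eq_integral => y _.
  rewrite /kk /patch /=; case: asboolP => [h|h].
    by rewrite mem_set.
  by rewrite memNset.
by rewrite ge0_integral_mscale.
Qed.
End R1f.

End R1fM.
Import R1fM.

Module MeasM.
Local Set Implicit Arguments. Local Unset Strict Implicit. Local Unset Printing Implicit Defensive.
Local Open Scope ereal_scope.

Section Meas.
Context d (T : measurableType d) (R : realType).
Variables (mu : probability T R) (n : nat) (E : 'I_n -> set T) (adj : rel 'I_n)
  (r : 'I_n -> R.-pker T ~> T).
Hypothesis mE : forall i, measurable (E i).

Notation RV := (run_val adj E r).

Lemma RV_cat Q k x J (h1 h2 : seq (step n)) :
  RV Q k x J (h1 ++ h2) = RV (fun h => Q (h1 ++ h)) k x J h2.
Proof.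
elim: k x J h2 => [|k IH] x J h2 //=.
case: asboolP => // _.
case: next_event => [i|].
  by rewrite rcons_cat; apply: eq_integral => y _; exact: IH.
case: (J == finset.set0); first by rewrite rcons_cat.
by rewrite rcons_cat IH.
Qed.

Lemma RV_nil Q k x J (h : seq (step n)) :
  RV Q k x J h = RV (fun h' => Q (h ++ h')) k x J [::].
Proof. by rewrite -RV_cat cats0. Qed.

Definition bv (y : T) : {ffun 'I_n -> bool} := [ffun j => `[< E j y >]].

Definition NE J (b : {ffun 'I_n -> bool}) : option 'I_n :=
  ohead [seq i <- enum 'I_n | (i \notin Defs.closedN adj J) && b i].

Lemma next_event_bv y J : next_event adj E y J = NE J (bv y).
Proof. by rewrite /next_event /NE; congr ohead; apply: eq_filter => i; rewrite ffunE. Qed.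

Lemma mbv (b : {ffun 'I_n -> bool}) : measurable [set y | bv y = b].
Proof.
have -> : [set y | bv y = b] = \bigcap_(j in [set: 'I_n]) (if b j then E j else ~` E j).
  apply/seteqP; split => y /=.
    move=> <- j _; rewrite ffunE; case: asboolP => //.
  move=> H; apply/ffunP => j; rewrite ffunE; have := H j I.
  by case: (b j); case: asboolP.
apply: fin_bigcap_measurable; first exact: finite_finset.
by move=> j _; case: (b j) => //; apply: measurableC.
Qed.

Lemma mpiece (F : option 'I_n -> T -> \bar R) J :
  (forall o, measurable_fun setT (F o)) ->
  measurable_fun setT (fun y => F (next_event adj E y J) y).
Proof.
move=> mF _ B mB; rewrite setTI.
have -> : (fun y => F (next_event adj E y J) y) @^-1` B =
    \bigcup_(b in [set: {ffun 'I_n -> bool}]) ([set y | bv y = b] `&` (F (NE J b) @^-1` B)).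
  apply/seteqP; split => y /=.
    by move=> H; exists (bv y) => //; split => //=; rewrite -next_event_bv.
  by case=> b _ [/= <-]; rewrite -next_event_bv.
apply: fin_bigcup_measurable; first exact: finite_finset.
move=> b _; apply: measurableI; first exact: mbv.
by have := mF (NE J b) measurableT B mB; rewrite setTI.
Qed.


Lemma RV_ge0 Q k x J (h : seq (step n)) : 0 <= RV Q k x J h.
Proof.
elim: k x J h => [|k IH] x J h /=; first by case: asboolP.
case: asboolP => // _.
case: next_event => [i|]; first by apply: integral_ge0 => y _; exact: IH.
by case: (J == _); [case: asboolP|exact: IH].
Qed.

Lemma mRV Q k J (h : seq (step n)) : measurable_fun setT (fun y => RV Q k y J h).
Proof.
elim: k J h => [|k IH] J h /=.
  by case: asboolP => _; exact: measurable_cst.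
case: asboolP => _; first exact: measurable_cst.
apply: (mpiece (F := fun o y => match o with
  | Some i => \int[r i y]_z RV Q k z (i |: J) (rcons h (Res i))
  | None => if J == finset.set0 then (if `[< Q (rcons h Halt) >] then 1 else 0)
            else RV Q k y finset.set0 (rcons h EndIt) end)).
move=> [i|].
  apply: (measurable_fun_integral_kernel (l := r i)).
  - exact: measurable_kernel.
  - by move=> z; exact: RV_ge0.
  - exact: IH.
case: (J == _); last exact: IH.
by case: asboolP => _; exact: measurable_cst.
Qed.

Lemma RV_le1 Q k x J (h : seq (step n)) : RV Q k x J h <= 1.
Proof.
elim: k x J h => [|k IH] x J h /=; first by case: asboolP.
case: asboolP => // _.
case: next_event => [i|]; last first.
  by case: (J == _); [case: asboolP|exact: IH].
apply: (@le_trans _ _ (\int[r i x]_y (cst 1 y))).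
  apply: (ge0_le_integral _ measurableT).
  - by move=> y _; exact: RV_ge0.
  - exact: mRV.
  - by apply: measurable_cst.
  - by move=> y _; exact: IH.
by rewrite integral_cst // mul1e prob_kernel.
Qed.


Fixpoint Alt (w : seq (step n)) (x : T) : \bar R :=
  match w with
  | [::] => 1
  | Res i :: w' => (\1_(E i) x)%:E * \int[r i x]_y Alt w' y
  | EndIt :: w' => Alt w' x
  | Halt :: _ => 1
  end.

Fixpoint pw (w : seq (step n)) : R :=
  match w with
  | [::] => 1%R
  | Res i :: w' => (fine (mu (E i)) * pw w')%R
  | EndIt :: w' => pw w'
  | Halt :: _ => 1%R
  end.

Lemma Alt_ge0 w x : 0 <= Alt w x.
Proof.
elim: w x => [|[i| |] w IH] x //=.
by apply: mule_ge0; [rewrite lee_fin|apply: integral_ge0 => y _; exact: IH].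
Qed.

Lemma mAlt w : measurable_fun setT (Alt w).
Proof.
elim: w => [|[i| |] w IH] //=; try exact: measurable_cst.
apply: emeasurable_funM.
  by apply/measurable_EFinP; exact: measurable_indic.
apply: (measurable_fun_integral_kernel (l := r i)).
- exact: measurable_kernel.
- by move=> z; exact: Alt_ge0.
- exact: IH.
Qed.

Hypothesis R1 : forall i, oracle_R1 E mu r i.
Hypothesis Epos : forall i, 0 < mu (E i).

Lemma intAlt w : \int[mu]_x Alt w x = (pw w)%:E.
Proof.
have c1 : \int[mu]_x (cst 1 x) = 1 by rewrite integral_cst // mul1e; exact: probability_setT.
elim: w => [|[i| |] w IH] //=.
rewrite -[RHS]/((fine (mu (E i)))%:E * (pw w)%:E) -IH.
rewrite -(R1f (mE i) (R1 i) (Epos i) (@Alt_ge0 w) (mAlt w)).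
rewrite [RHS]integral_mkcond; apply: eq_integral => x _.
rewrite /patch indicE; case: (x \in E i); first by rewrite mul1e.
by rewrite mul0e.
Qed.


Lemma eq_RV (P1 P2 : seq (step n) -> Prop) k x J (h : seq (step n)) :
  (forall h, P1 h <-> P2 h) -> RV P1 k x J h = RV P2 k x J h.
Proof. by move=> H; have -> : P1 = P2 by apply/funext => h'; apply/propext. Qed.

Lemma sorted_enumI : sorted (ltI (n:=n)) (enum 'I_n).
Proof. by have := iota_ltn_sorted 0 n; rewrite -val_enum_ord sorted_map. Qed.

Lemma next_someP x J i : next_event adj E x J = Some i ->
  [/\ i \notin Defs.closedN adj J, E i x &
      forall j : 'I_n, (j < i)%N -> j \notin Defs.closedN adj J -> ~ E j x].
Proof.
rewrite /next_event.
set p := fun i0 : 'I_n => (i0 \notin Defs.closedN adj J) && `[< E i0 x >].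
have ss : sorted (ltI (n:=n)) [seq i0 <- enum 'I_n | p i0].
  by apply: sorted_filter; [exact: (@ltI_trans n) | exact: sorted_enumI].
case Es: [seq i0 <- enum 'I_n | p i0] ss => [|a s'] //= ss [<-].
have : a \in [seq i0 <- enum 'I_n | p i0] by rewrite Es mem_head.
rewrite mem_filter => /andP [/andP [na /asboolP Ea] _].
split => // j ja nj Ej.
have : j \in [seq i0 <- enum 'I_n | p i0].
  by rewrite mem_filter /p nj /= mem_enum andbT; apply/asboolP.
rewrite Es in_cons => /orP [/eqP ej|js].
  by rewrite ej ltnn in ja.
have := order_path_min (@ltI_trans n) ss => /allP /(_ j js).
by rewrite /ltI ltnNge ltnW.
Qed.

Lemma next_noneP x J : next_event adj E x J = None ->
  forall j, j \notin Defs.closedN adj J -> ~ E j x.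
Proof.
rewrite /next_event.
case Es: [seq i0 <- enum 'I_n | (i0 \notin Defs.closedN adj J) && `[< E i0 x >]] => [|a s'] // _ j nj Ej.
have : j \in [::] by rewrite -Es mem_filter nj /= mem_enum andbT; apply/asboolP.
by rewrite in_nil.
Qed.

Lemma closedN_mono (A B : {set 'I_n}) : A \subset B ->
  Defs.closedN adj A \subset Defs.closedN adj B.
Proof.
move/fintype.subsetP => sub; apply/fintype.subsetP => j; rewrite !inE.
case/orP => [jA|/existsP [i /andP [iA aij]]]; first by rewrite sub.
by apply/orP; right; apply/existsP; exists i; rewrite sub.
Qed.

Definition Inv x (cur : seq 'I_n) (prev : option {set 'I_n}) : Prop :=
  forall j, j \notin Defs.closedN adj [set z in cur] ->
    (has (fun l => ltI j l) cur || ~~ prevok adj prev j) -> ~ E j x.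

Hypothesis R2 : forall i, oracle_R2 adj E r i.

Lemma ae_inv x cur prev i : Inv x cur prev -> next_event adj E x [set z in cur] = Some i ->
  \forall y \ae (r i x), Inv y (rcons cur i) prev.
Proof.
move=> Hinv Enx; have [ni Ei mini] := next_someP Enx.
pose P j y := (j \notin Defs.closedN adj [set z in rcons cur i]) ->
    (has (fun l => ltI j l) (rcons cur i) || ~~ prevok adj prev j) -> ~ E j y.
have : \forall y \ae (r i x), forall j, P j y.
  apply: filter_forall => j.
  have [c|c] := boolP ((j \notin Defs.closedN adj [set z in rcons cur i]) &&
                 (has (fun l => ltI j l) (rcons cur i) || ~~ prevok adj prev j)); last first.
    apply: nearW => y c1 c2; move: c; rewrite c1 c2 //.
  case/andP: c => c1 c2.
  have nj1 : j \notin Defs.closedN adj [set z in cur].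
    apply: contra c1; apply/fintype.subsetP; apply: closedN_mono.
    by apply/fintype.subsetP => z; rewrite !inE mem_rcons in_cons orbC => ->.
  have nj2 : j \notin Defs.closedN adj [set i].
    apply: contra c1; apply/fintype.subsetP; apply: closedN_mono.
    by apply/fintype.subsetP => z; rewrite !inE mem_rcons in_cons => ->.
  have nEx : ~ E j x.
    move: c2; rewrite has_rcons -orbA => /orP [H|H].
      exact: mini H nj1.
    exact: Hinv.
  exists (E j); split => //; first by rewrite (R2 nj2 nEx).
  by move=> y /= H; apply: contrapT => nEy; apply: H => _ _.
apply: filterS => y H j; exact: H.
Qed.


Lemma set_rcons (cur : seq 'I_n) i : i |: [set z in cur] = [set z in rcons cur i].
Proof. by apply/setP => z; rewrite !inE mem_rcons in_cons. Qed.

Lemma le_if (P P' : Prop) : (P -> P') ->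
  (if `[< P >] then 1 else 0 : \bar R) <= (if `[< P' >] then 1 else 0).
Proof.
move=> H; case: (asboolP P) => [p|p]; first by rewrite asboolT //; exact: H.
by case: asboolP.
Qed.

Lemma prune k Q x cur prev : Inv x cur prev ->
  RV Q k x [set z in cur] [::] <=
  RV (fun h => Q h /\ goodF adj prev cur h) k x [set z in cur] [::].
Proof.
elim: k Q x cur prev => [|k IH] Q x cur prev Hinv /=.
  by apply: le_if => q; split.
case: (asboolP (Q [::])) => [q|q].
  by rewrite asboolT.
have nq : ~ (Q [::] /\ true) by case. rewrite (asboolF nq).
case Enx: next_event => [i|].
- have [ni Ei mini] := next_someP Enx.
  have chk : [&& i \notin Defs.closedN adj [set z in cur],
                 all (fun j => ltI j i) cur & prevok adj prev i].
    apply/and3P; split => //.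
    + apply/allP => l lc.
      have li : l != i.
        apply: contraNneq ni => <-; rewrite inE; apply/orP; left; by rewrite inE.
      case: (ltngtP l i) => // [il|/val_inj eli]; last by rewrite eli eqxx in li.
      exfalso; apply: (Hinv i ni) => //.
      by apply/orP; left; apply/hasP; exists l.
    + apply: contraT => np; exfalso; apply: (Hinv i ni) => //.
      by rewrite np orbT.
  rewrite set_rcons.
  apply: (ae_ge0_le_integral measurableT).
  - by move=> y _; exact: RV_ge0.
  - exact: mRV.
  - by move=> y _; exact: RV_ge0.
  - exact: mRV.
  apply: filterS (ae_inv Hinv Enx) => y Hy _.
  rewrite -[[:: Res i]]/([:: Res i] ++ [::]) !RV_cat.
  apply: le_trans (IH _ y (rcons cur i) prev Hy) _.
  rewrite le_eqVlt; apply/orP; left; apply/eqP; apply: eq_RV => h /=.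
  by case/and3P: chk => -> -> ->.
- have Hnone := next_noneP Enx.
  case: ifPn => [J0|J0].
    by apply: le_if => q1; split.
  have cn : cur != [::].
    by apply: contraNneq J0 => ->; apply/eqP/setP => z; rewrite !inE.
  have -> : finset.set0 = [set z in ([::] : seq 'I_n)] by apply/setP => z; rewrite !inE.
  rewrite -[[:: EndIt]]/([:: EndIt] ++ [::]) !RV_cat.
  have Hinv' : Inv x [::] (Some [set z in cur]).
    move=> j _ /=; exact: Hnone.
  apply: le_trans (IH _ x [::] _ Hinv') _.
  rewrite le_eqVlt; apply/orP; left; apply/eqP; apply: eq_RV => h /=.
  by rewrite cn.
Qed.


Fixpoint inL {A : Type} (a : A) (s : seq A) : Prop :=
  if s is b :: s' then b = a \/ inL a s' else False.

Lemma sum_ge_In (F : seq (step n) -> \bar R) (Ws : seq (seq (step n))) w0 :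
  (forall w, 0 <= F w) -> inL w0 Ws -> F w0 <= \sum_(w <- Ws) F w.
Proof.
move=> F0; elim: Ws => [|a Ws IH] //= [->|H]; rewrite big_cons.
  by apply: leeDl; apply: sume_ge0.
by apply: le_trans (IH H) _; apply: leeDr.
Qed.

Lemma sum_split (hd : seq (step n) -> bool) (G F : seq (step n) -> \bar R)
    (Ws : seq (seq (step n))) :
  (forall w, 0 <= F w) -> (forall w, hd w -> G (behead w) <= F w) ->
  \sum_(w' <- [seq behead w | w <- Ws & hd w]) G w' <= \sum_(w <- Ws) F w.
Proof.
move=> F0 GF; elim: Ws => [|a Ws IH] /=; first by rewrite !big_nil.
rewrite big_cons; case: ifP => ha.
  by rewrite /= big_cons; apply: leeD => //; exact: GF.
by apply: le_trans IH _; apply: leeDr.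
Qed.

Lemma In_behead (hd : seq (step n) -> bool) (Ws : seq (seq (step n))) w :
  inL w Ws -> hd w -> inL (behead w) [seq behead w | w <- Ws & hd w].
Proof.
elim: Ws => [|a Ws IH] //= [->|H] hw; first by rewrite hw; left.
by case: ifP => _; [right|]; apply: IH.
Qed.

Definition headRes i (w : seq (step n)) : bool :=
  if w is Res j :: _ then j == i else false.
Definition headEnd (w : seq (step n)) : bool :=
  if w is EndIt :: _ then true else false.

Lemma union k Q x J (Ws : seq (seq (step n))) :
  (forall h, Q h -> exists2 w, inL w Ws & pre w h) ->
  RV Q k x J [::] <= \sum_(w <- Ws) Alt w x.
Proof.
elim: k Q x J Ws => [|k IH] Q x J Ws HQ.
  have [nil|nnil] := pselect (inL [::] Ws).
    apply: le_trans (RV_le1 _ _ _ _ _) _.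
    exact: (sum_ge_In (F := fun w => Alt w x)) (fun w => Alt_ge0 w x) nil.
  rewrite /=; case: asboolP => [q|_]; last by apply: sume_ge0 => w _; exact: Alt_ge0.
  have [w wW [h' Ew]] := HQ _ q.
  by case: w Ew wW => // _ /nnil.
have [nil|nnil] := pselect (inL [::] Ws).
  apply: le_trans (RV_le1 _ _ _ _ _) _.
  exact: (sum_ge_In (F := fun w => Alt w x)) (fun w => Alt_ge0 w x) nil.
have nq : ~ Q [::].
  by move=> q; have [w wW [h' Ew]] := HQ _ q; case: w Ew wW => // _ /nnil.
rewrite /= (asboolF nq).
case Enx: next_event => [i|].
- have [ni Ei mini] := next_someP Enx.
  rewrite -[[:: Res i]]/([:: Res i] ++ [::]).
  under eq_integral do rewrite RV_cat.
  set Ws' := [seq behead w | w <- Ws & headRes i w].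
  have HQ' : forall h, Q (Res i :: h) -> exists2 w, inL w Ws' & pre w h.
    move=> h q; have [w wW [h' Ew]] := HQ _ q.
    case: w Ew wW => [|s w] Ew wW; first by case: (nnil wW).
    case: Ew => Es Eh; subst s.
    exists w; last by exists h'.
    exact: (In_behead (hd := headRes i) wW (eqxx i)).
  apply: (@le_trans _ _ (\int[r i x]_y \sum_(w <- Ws') Alt w y)).
    apply: (ge0_le_integral _ measurableT).
    - by move=> y _; exact: RV_ge0.
    - exact: mRV.
    - by apply: emeasurable_sum => w; exact: mAlt.
    - by move=> y _; exact: IH.
  rewrite ge0_integral_sum //; last first.
    - by move=> w y _; exact: Alt_ge0.
    - by move=> w; exact: mAlt.
  apply: sum_split; first by move=> w; exact: Alt_ge0.
  case=> [|[j| |] w] //= /eqP ->.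
  by rewrite indicE mem_set // mul1e.
- case: ifPn => J0.
    case: asboolP => [q|_]; last by apply: sume_ge0 => w _; exact: Alt_ge0.
    have [w wW [h' Ew]] := HQ _ q.
    case: w Ew wW => [|s w] Ew wW; first by case: (nnil wW).
    case: Ew => Es _; subst s.
    exact: (sum_ge_In (F := fun w0 => Alt w0 x) (fun w0 => Alt_ge0 w0 x) wW).
  rewrite -[[:: EndIt]]/([:: EndIt] ++ [::]) RV_cat.
  set Ws' := [seq behead w | w <- Ws & headEnd w].
  have HQ' : forall h, Q (EndIt :: h) -> exists2 w, inL w Ws' & pre w h.
    move=> h q; have [w wW [h' Ew]] := HQ _ q.
    case: w Ew wW => [|s w] Ew wW; first by case: (nnil wW).
    case: Ew => Es Eh; subst s.
    exists w; last by exists h'.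
    exact: (In_behead (hd := headEnd) wW isT).
  apply: le_trans (IH _ x _ _ HQ') _.
  apply: sum_split; first by move=> w; exact: Alt_ge0.
  by case=> [|[j| |] w].
Qed.


Lemma alg_bound Q (Ws : seq (seq (step n))) :
  (forall h, Q h -> goodF adj None [::] h -> exists2 w, inL w Ws & pre w h) ->
  alg_prob adj E mu r Q <= (\sum_(w <- Ws) pw w)%:E.
Proof.
move=> HQ; rewrite /alg_prob; apply: ub_ereal_sup => _ [k _ <-].
have e0 : finset.set0 = [set z in ([::] : seq 'I_n)] by apply/setP => z; rewrite !inE.
apply: (@le_trans _ _ (\int[mu]_x \sum_(w <- Ws) Alt w x)).
  apply: (ge0_le_integral _ measurableT).
  - by move=> y _; exact: RV_ge0.
  - exact: mRV.
  - by apply: emeasurable_sum => w; exact: mAlt.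
  move=> y _; rewrite e0.
  have Hinv : Inv y [::] None by move=> j _; rewrite /prevok /=.
  apply: le_trans (prune k Q Hinv) _.
  apply: union => h [q g]; exact: HQ.
rewrite ge0_integral_sum //; last first.
  - by move=> w y _; exact: Alt_ge0.
  - by move=> w; exact: mAlt.
rewrite -sumEFin le_eqVlt; apply/orP; left; apply/eqP.
by apply: eq_bigr => w _; exact: intAlt.
Qed.

End Meas.

End MeasM.
Import MeasM.


Section Final.
Context d (T : measurableType d) (R : realType).
Variables (mu : probability T R) (n : nat) (E : 'I_n -> set T) (adj : rel 'I_n)
  (r : 'I_n -> R.-pker T ~> T).

Lemma pw_map (b : seq 'I_n) (w : seq (step n)) :
  pw mu E (map (@Res n) b ++ w) = (\prod_(i <- b) fine (mu (E i)) * pw mu E w)%R.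
Proof.
elim: b => [|i b IH] /=; first by rewrite big_nil mul1r.
by rewrite IH big_cons mulrA.
Qed.

Lemma pw_wordOf (bs : seq (seq 'I_n)) :
  pw mu E (wordOf bs) = (\prod_(b <- bs) \prod_(i <- b) fine (mu (E i)))%R.
Proof.
elim: bs => [|b bs IH]; first by rewrite big_nil.
case: bs IH => [|b' bs] IH.
  by rewrite /= -[map _ b]cats0 pw_map big_seq1 /= mulr1.
rewrite (_ : wordOf (b :: b' :: bs) = map (@Res n) b ++ EndIt :: wordOf (b' :: bs)) //.
rewrite pw_map.
have -> : pw mu E (EndIt :: wordOf (b' :: bs)) = pw mu E (wordOf (b' :: bs)) by [].
by rewrite IH !big_cons.
Qed.

Lemma pw_wI (I : seq {set 'I_n}) : pw mu E (wI I) = pI E mu I.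
Proof.
rewrite /wI pw_wordOf big_map /pI; apply: eq_bigr => S _.
by rewrite big_enum.
Qed.


Lemma inL_map (A : eqType) (B : Type) (f : A -> B) (x : A) (s : seq A) :
  x \in s -> inL (f x) (map f s).
Proof.
elim: s => [|a s IH] //; rewrite in_cons => /orP [/eqP ->|xs] /=; first by left.
by right; exact: IH.
Qed.

Lemma inL_flatten (B : Type) (L : nat -> seq B) (ls : seq nat) l w :
  l \in ls -> inL w (L l) -> inL w (flatten (map L ls)).
Proof.
have inL_cat : forall (s1 s2 : seq B), inL w s1 \/ inL w s2 -> inL w (s1 ++ s2).
  elim=> [|a s1 IH] s2 /=; first by case.
  by case=> [[->|H]|H]; [left|right; apply: IH; left|right; apply: IH; right].
elim: ls => [|a ls IH] //; rewrite in_cons => /orP [/eqP <-|H] Hw /=.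
  by apply: inL_cat; left.
by apply: inL_cat; right; exact: IH.
Qed.

Lemma sum_tuples (l : nat) (P : pred (l.-tuple {set 'I_n})) :
  (\sum_(w <- [seq wI (val t) | t <- enum P]) pw mu E w =
   \sum_(I : l.-tuple {set 'I_n} | P I) pI E mu I)%R.
Proof.
rewrite big_map -deprecated_filter_index_enum big_filter.
by apply: eq_bigr => I _; rewrite pw_wI.
Qed.

End Final.


Theorem mainTheorem6 (d : measure_display) (T : measurableType d) (R : realType)
  (mu : probability T R) (n : nat) (E : 'I_n -> set T) (adj : rel 'I_n)
  (r : 'I_n -> R.-pker T ~> T) :
  simple_graph adj ->
  (forall i, measurable (E i)) ->
  (forall i, (0 < mu (E i))%E) ->
  (forall i, oracle_R1 E mu r i) ->
  (forall i, oracle_R2 adj E r i) ->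
  (forall I : seq {set 'I_n}, proper_stable_seq adj I ->
     (alg_prob adj E mu r (follows_trace I) <= (pI E mu I)%:E)%E) /\
  (forall l : nat, (1 <= l)%N ->
     (alg_prob adj E mu r (atleast_iter_trace l) <=
      (\sum_(I : l.-tuple {set 'I_n} | proper_stable_seq adj I) pI E mu I)%:E)%E) /\
  (forall s : nat, (1 <= s)%N ->
     (alg_prob adj E mu r (atleast_res_trace s) <=
      (\sum_(0 <= l < s.+1)
         \sum_(I : l.-tuple {set 'I_n} |
                 proper_stable_seq adj I && (sigma_seq I == s)) pI E mu I)%:E)%E).
Proof.
move=> sg mE Epos R1 R2.
have GBh : forall h, goodF adj None [::] h -> GB adj None (blocks h).
  move=> h g; have := goodF_GB sg (blk_ok_nil adj None) g.
  by rewrite cat0s -(blocks_cons h).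
split; [|split].
- move=> I pI_.
  apply: (@le_trans _ _ (\sum_(w <- [:: wI I]) pw mu E w)%:E).
    apply: (alg_bound mE R1 Epos R2) => h q g.
    exists (wI I); first by left.
    case E0: I q => [|S I'] q; first by exists h.
    by apply: follows_pre (GBh h g) q _.
  by rewrite big_seq1 pw_wI.
- move=> l l1.
  set P := fun t : l.-tuple {set 'I_n} => proper_stable_seq adj t.
  rewrite -(@sum_tuples _ _ _ mu _ E l P).
  apply: (alg_bound mE R1 Epos R2) => h q g.
  have [pr sz pre_] := iter_pre (GBh h g) l1 q.
  set J := map (setOf (n:=n)) (take l (blocks h)) in pr pre_.
  have szJ : size J == l by rewrite size_map sz.
  pose tJ : l.-tuple {set 'I_n} := Tuple szJ.
  exists (wI (val tJ)) => //.
  apply: (@inL_map _ _ (fun t : l.-tuple {set 'I_n} => wI (val t))).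
  by rewrite mem_enum.
- move=> s s1.
  rewrite (_ : (\sum_(0 <= l < s.+1) _)%R =
     \sum_(w <- flatten [seq [seq wI (val t) | t <- enum (fun t : l.-tuple {set 'I_n} =>
          proper_stable_seq adj t && (sigma_seq t == s))] | l <- iota 0 s.+1]) pw mu E w)%R;
    last first.
    rewrite big_flatten big_map /index_iota subn0; apply: eq_bigr => l _.
    by rewrite sum_tuples.
  apply: (alg_bound mE R1 Epos R2) => h q g.
  rewrite /atleast_res_trace (count_res g) in q.
  have [J [pr szJ sigJ pre_]] := res_pre (GBh h g) s1 q.
  pose tJ : (size J).-tuple {set 'I_n} := Tuple (eqxx (size J)).
  exists (wI (val tJ)) => //.
  apply: (@inL_flatten _ _ _ (size J)); first by rewrite mem_iota add0n ltnS.
  apply: (@inL_map _ _ (fun t : (size J).-tuple {set 'I_n} => wI (val t))).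
  rewrite mem_enum /=; apply/andP; split; [exact: pr | exact/eqP].
Qed.
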